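(* Consider a run of the algorithm described in the context, and assume the event $\mathcal E$ occurs. Let $j$ be an iteration of the run and let $\mathcal V_{(j)}$ be the value of $\mathcal V$ at the start of iteration $j$. For a family $f$ define \[S_j^{\neg}(f):=\max\{\mathcal S(E): E\in\mathcal E_{d,k},\ E^{(j)}\neq\emptyset,\ f\notin U(E^{(j)})\}.\] Suppose that for some $f\in U(\mathcal G_j^* )\cap\mathcal F_{\mathrm{act}}(\mathcal V_{(j)})$ we have $S_j^\neg(f)<\mathcal S^*-2\theta_j$, where $\mathcal G_j^*=\{G\in\mathcal G_j:\mathcal S(G)=\mathcal S^*\}$. Then some family is accepted by the algorithm at iteration $j$.
   Context: Setting. $\mathbf{X}=(X_1,\dots,X_d)$ is a random vector; $k$ a fixed positive integer; natural logarithms. A family is $f=\langle X_i,\Pi\rangle$ with $\Pi\subseteq\{X_1,\dots,X_d\}\setminus\{X_i\}$, $|\Pi|\le k$; $\mathcal F_{d,k}$ the set of families; $H(f)=H(X_i\mid\Pi)$. $\mathcal G_{d,k}$ = DAGs over the variables with in-degree $\le k$, identified with their family sets; $\mathcal S(F)=-\sum_{f\in F}H(f)$; $\mathcal S^*=\max_{G\in\mathcal G_{d,k}}\mathcal S(G)$. $\mathcal E_{d,k}$ is the set of Markov equivalence classes (ECs) on $\mathcal G_{d,k}$; graphs in an EC $E$ share a score $\mathcal S(E)$. Each sample is an independent copy of $\mathbf X$ of which only a chosen set of $k+1$ coordinates is revealed. $\hat H$ is an estimator of $H(f)$ from the samples where all variables of $f$ were observed, and $N(\epsilon,\delta)$ is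 such that for any fixed $f$, at least $N(\epsilon,\delta)$ such samples give $|\hat H(f)-H(f)|\le\epsilon$ with probability $\ge1-\delta$. Notation: $\mathcal F_{\mathrm{act}}(\mathcal V)$ = families whose child is not in $\mathcal V\subseteq[d]$; $\mathcal G_j=\{G\in\mathcal G_{d,k}:\mathcal A_j\subseteq G\}$; $E^{(j)}=E\cap\mathcal G_j$; $U(\mathcal A)=\bigcup_{G\in\mathcal A}G$; $\hat H_t(f)$ = estimate from all samples up to round $t$; $\hat{\mathcal S}_t(G)=-\sum_{f\in G}\hat H_t(f)$; $\hat{\mathcal S}_t(\mathcal A)=\max_{G\in\mathcal A}\hat{\mathcal S}_t(G)$. Algorithm (inputs $d,k,\delta\in(0,1),\epsilon,\epsilon_1>0$). Initialize $\mathcal A_1=\emptyset,\mathcal V=\emptyset,N_0=0,t=1,j=1,T=\lceil\log_2(2d\epsilon_1/\epsilon)\rceil$. While $\epsilon_t>\epsilon/(d-|\mathcal V|)$ (a ''round'' $t$): $N_t=N(\epsilon_t/2,\delta/(T|\mathcal F_{\mathrm{act}}(\mathcal V)|))$; observe each $(k+1)$-subset of $[d]$ not contained in $\mathcal V$ in $N_t-N_{t-1}$ new samples; repeat the following ''iteration'' until $\mathcal A_j=\mathcal A_{j-1}$: $\theta_j=(d-|\mathcal V|)\epsilon_t$; $\hat G_j\in\arg\max_{G\in\mathcal G_j}\hat{\mathcal S}_t(G)$, $\hat E_j$ its EC; $L_j=\{E\in\mathcal E_{d,k}:E^{(j)}\neq\emptyset,\hat{\mathcal S}_t(\hat E_j^{(j)})-\hat{\mathcal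 S}_t(E^{(j)})\le\theta_j\}$; if some $f\in U(\hat E_j^{(j)})\cap\mathcal F_{\mathrm{act}}(\mathcal V)$ satisfies $f\in U(E^{(j)})$ for all $E\in L_j$, accept one such $f=\langle X_v,\Pi\rangle$: $\mathcal V\leftarrow\mathcal V\cup\{v\}$, $\mathcal A_{j+1}=\mathcal A_j\cup\{f\}$; else $\mathcal A_{j+1}=\mathcal A_j$; $j\leftarrow j+1$. After the iterations, if $|\mathcal V|=d$ return $\mathcal A_j$; else $t\leftarrow t+1$, $\epsilon_t=\epsilon_{t-1}/2$. After the while loop: $\epsilon_{\mathrm{last}}=\epsilon/(d-|\mathcal V|)$, $N_T=N(\epsilon_{\mathrm{last}}/2,\delta/(T|\mathcal F_{\mathrm{act}}(\mathcal V)|))$, observe remaining subsets in $N_T-N_{T-1}$ more samples, return a maximizer of $\hat{\mathcal S}_T$ over $\mathcal G_j$. Event: with $\mathcal V_t$ the value of $\mathcal V$ at the start of round $t$, $\mathcal E:=\{\forall t\in[T],\forall f\in\mathcal F_{\mathrm{act}}(\mathcal V_t): |\hat H_t(f)-H(f)|\le\epsilon_t/2\}$. *)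

(* Defs.v *)
From mathcomp Require Import all_boot all_order all_algebra.
From mathcomp Require Import boolp.
Set Implicit Arguments. Unset Strict Implicit. Unset Printing Implicit Defensive.
Import Order.TTheory GRing.Theory Num.Theory.
Local Open Scope ring_scope.

(* Variables X_1..X_d are indexed by 'I_d.  A (candidate) family <X_i, Pi>
   is a pair (i, Pi). *)
Definition fam (d : nat) : finType := ('I_d * {set 'I_d})%type.

Section Defs.
Variables (d k : nat).
Local Notation fam := (fam d).

Definition is_family (f : fam) : bool := (f.1 \notin f.2) && (#|f.2| <= k)%N.

Definition edge (G : {set fam}) : rel 'I_d :=
  fun x y => [exists P : {set 'I_d}, ((y, P) \in G) && (x \in P)].

Definition is_dag (G : {set fam}) : bool :=
  [forall f in G, is_family f] &&
  [forall i : 'I_d, #|[set f in G | f.1 == i]| == 1%N] &&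
  [forall x : 'I_d, forall y : 'I_d, edge G x y ==> ~~ connect (edge G) y x].

Definition dags : {set {set fam}} := [set G | is_dag G].

Definition adj (G : {set fam}) : rel 'I_d := fun a b => edge G a b || edge G b a.

Definition active_trail (G : {set fam}) (Z : {set 'I_d}) (x : 'I_d) (r : seq 'I_d)
  : bool :=
  let s := x :: r in
  [&& uniq s, path (adj G) x r &
   [forall i : 'I_(size r), (0 < i)%N ==>
      (let a := nth x s i.-1 in let b := nth x s i in let c := nth x s i.+1 in
       if edge G a b && edge G c b
       then [exists z in Z, connect (edge G) b z]
       else b \notin Z)]].

Definition d_connected (G : {set fam}) (x y : 'I_d) (Z : {set 'I_d}) : Prop :=
  exists r : seq 'I_d, active_trail G Z x r /\ last x r = y.

Definition markov_equiv (G G' : {set fam}) : Prop :=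
  forall (x y : 'I_d) (Z : {set 'I_d}), x != y -> x \notin Z -> y \notin Z ->
    (d_connected G x y Z <-> d_connected G' x y Z).

Definition ec (G : {set fam}) : {set {set fam}} :=
  [set G' | is_dag G' & `[< markov_equiv G G' >]].

Definition ecs : {set {set {set fam}}} := [set ec G | G in dags].

Definition Uf (S : {set {set fam}}) : {set fam} := \bigcup_(G in S) G.

Definition Fact_act (V : {set 'I_d}) : {set fam} :=
  [set f : fam | is_family f & f.1 \notin V].

(* set of children of a set of families (= the set V of the algorithm) *)
Definition Vof (A : {set fam}) : {set 'I_d} := [set f.1 | f in A].

Definition Gof (A : {set fam}) : {set {set fam}} := [set G in dags | A \subset G].

Variable R : realFieldType.

(* maximum of F over a (nonempty) finite set S; 0 on the empty set (never used) *)
Definition smax (T : finType) (S : {set T}) (F : T -> R) : R :=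
  if [pick x in S] is Some x0 then \big[Num.max/F x0]_(x in S) F x else 0.

Definition score (h : fam -> R) (G : {set fam}) : R := - \sum_(f in G) h f.

(* S(E) (graphs in an EC share a score; maximum over the class) *)
Definition scoreE (h : fam -> R) (E : {set {set fam}}) : R := smax E (score h).

Definition Sstar (h : fam -> R) : R := smax dags (score h).

Definition Gstar (h : fam -> R) (A : {set fam}) : {set {set fam}} :=
  [set G in Gof A | score h G == Sstar h].

Variables (eps eps1 : R).

Definition eps_t (t : nat) : R := eps1 / 2 ^+ t.-1.

Definition theta (t : nat) (A : {set fam}) : R := (d - #|Vof A|)%:R * eps_t t.

Definition is_argmax (hh : fam -> R) (A : {set fam}) (Ghat : {set fam}) : Prop :=
  Ghat \in Gof A /\ forall G, G \in Gof A -> score hh G <= score hh Ghat.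

Definition acceptable (hh : fam -> R) (th : R) (A : {set fam}) (Ghat : {set fam})
  (f : fam) : Prop :=
  let EhatJ := ec Ghat :&: Gof A in
  f \in Uf EhatJ /\ f \in Fact_act (Vof A) /\
  forall E, E \in ecs -> E :&: Gof A != set0 ->
    smax EhatJ (score hh) - smax (E :&: Gof A) (score hh) <= th ->
    f \in Uf (E :&: Gof A).

Definition step (hh : fam -> R) (th : R) (A A' : {set fam}) : Prop :=
  exists Ghat, is_argmax hh A Ghat /\
    ((exists f, acceptable hh th A Ghat f /\ A' = f |: A) \/
     ((forall f, ~ acceptable hh th A Ghat f) /\ A' = A)).

Variable Hhat : nat -> fam -> R.

(* reach t A0 A : in some run, there is an iteration of round t which
   starts with accepted set A_j = A, the round having started with A0
   (so V_t = Vof A0 and V_(j) = Vof A). *)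
Inductive reach : nat -> {set fam} -> {set fam} -> Prop :=
| reach_start : eps / d%:R < eps_t 1 -> reach 1 set0 set0
| reach_iter t A0 A A' : reach t A0 A -> step (Hhat t) (theta t A) A A' ->
    A' != A -> reach t A0 A'
| reach_round t A0 A : reach t A0 A -> step (Hhat t) (theta t A) A A ->
    (#|Vof A| < d)%N -> eps / (d - #|Vof A|)%:R < eps_t t.+1 ->
    reach t.+1 A A.

Definition event (H : fam -> R) : Prop :=
  forall t A0 A, reach t A0 A ->
    forall f, f \in Fact_act (Vof A0) -> `|Hhat t f - H f| <= eps_t t / 2.

End Defs.

(* Main.v *)
Require Import Defs.
From mathcomp Require Import all_boot all_order all_algebra.
From mathcomp Require Import boolp.
From mathcomp Require Import lra.
Import Order.TTheory GRing.Theory Num.Theory.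
Local Open Scope ring_scope.
Set Implicit Arguments. Unset Strict Implicit.

Lemma smax_ge (R : realFieldType) (T : finType) (S : {set T}) (F : T -> R) x :
  x \in S -> F x <= smax S F.
Proof.
move=> Hx; rewrite /smax; case: pickP => [x0 Hx0|H0]; last by have := H0 x; rewrite Hx.
by rewrite (bigD1 x) //= le_max lexx.
Qed.

Lemma smax_ex (R : realFieldType) (T : finType) (S : {set T}) (F : T -> R) :
  S != set0 -> exists2 x, x \in S & smax S F = F x.
Proof.
move=> HS; rewrite /smax; case: pickP => [x0 Hx0|H0]; last first.
  by case/set0Pn: HS => x; rewrite H0.
apply: (big_ind (fun v => exists2 x, x \in S & v = F x)); first by exists x0.
  move=> a b [xa Ha ->] [xb Hb ->]; case: leP => _; [by exists xb| by exists xa].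
by move=> i Hi; exists i.
Qed.

Lemma reach_sub (d k : nat) (R : realFieldType) (eps eps1 : R) (Hhat : nat -> fam d -> R) t (A0 A : {set fam d}) :
  reach k eps eps1 Hhat t A0 A -> A0 \subset A.
Proof.
elim=> //= {t A0 A} t A0 A A' _ IH [Gh [_ [[g [_ ->]]|[_ ->]]]] Hne.
  by apply: (subset_trans IH); apply: subsetUr.
by rewrite eqxx in Hne.
Qed.

Lemma dag_inj d k (G : {set fam d}) g1 g2 : is_dag k G -> g1 \in G -> g2 \in G ->
  g1.1 = g2.1 -> g1 = g2.
Proof.
case/andP => /andP [_ /forallP Hone] _ H1 H2 He.
have /cards1P [x Hx] := Hone g1.1.
have : g1 \in [set f in G | f.1 == g1.1] by rewrite inE H1 eqxx.
have : g2 \in [set f in G | f.1 == g1.1] by rewrite inE H2 He eqxx.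
by rewrite Hx !inE => /eqP -> /eqP ->.
Qed.
Lemma diff_fact d k (A G : {set fam d}) g : G \in Gof k A -> g \in G :\: A ->
  g \in Fact_act k (Vof A).
Proof.
rewrite inE => /andP [HG HAG]; rewrite inE in HG.
rewrite !inE => /andP [HgA HgG]; apply/andP; split.
  by case/andP: HG => /andP [/forallP Hf _] _; have := Hf g; rewrite HgG.
apply/imsetP => -[a Ha Hea].
have Hag : a \in G by apply: (subsetP HAG).
by rewrite (dag_inj HG HgG Hag Hea) Ha in HgA.
Qed.

Lemma card_diff d k (A G : {set fam d}) : G \in Gof k A ->
  (#|G :\: A| <= d - #|Vof A|)%N.
Proof.
move=> HGA; have HG : is_dag k G by move: HGA; rewrite !inE => /andP [-> _].
have Hinj : {in G :\: A &, injective (fun g : fam d => g.1)}.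
  by move=> x y; rewrite !inE => /andP [_ Hx] /andP [_ Hy]; exact: dag_inj HG Hx Hy.
rewrite -(card_in_imset Hinj).
have -> : (d - #|Vof A| = #|~: Vof A|)%N by rewrite [RHS]cardsCs setCK card_ord.
apply: subset_leq_card; apply/subsetP => v /imsetP [g Hg ->].
by have := diff_fact HGA Hg; rewrite !inE => /andP [_ ->].
Qed.

Lemma err_bound d k (R : realFieldType) (A G : {set fam d}) (e : fam d -> R) c :
  G \in Gof k A -> 0 <= c ->
  (forall g, g \in Fact_act k (Vof A) -> `|e g| <= c) ->
  `|\sum_(g in G :\: A) e g| <= (d - #|Vof A|)%:R * c.
Proof.
move=> HGA Hc He.
apply: (le_trans (ler_norm_sum _ _ _)).
apply: (@le_trans _ _ (\sum_(g in G :\: A) c)).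
  by apply: ler_sum => g Hg; apply: He; apply: (diff_fact HGA).
rewrite sumr_const -(mulr_natl c); apply: ler_wpM2r => //; rewrite ler_nat.
exact: card_diff HGA.
Qed.

Lemma score_split d (R : realFieldType) (h : fam d -> R) (A G : {set fam d}) :
  A \subset G -> score h G = - (\sum_(g in A) h g + \sum_(g in G :\: A) h g).
Proof.
by move=> HAG; rewrite /score (big_setID A) /= (setIidPr HAG).
Qed.

Lemma ec_self d k (G : {set fam d}) : is_dag k G -> G \in ec k G.
Proof. by move=> HG; rewrite inE HG /=; apply/asboolP => x y Z _ _ _. Qed.

Theorem lemma3 (R : realFieldType) (d k : nat) (eps eps1 : R)
  (H : fam d -> R) (Hhat : nat -> fam d -> R)
  (Hscore_eq : forall G G' : {set fam d}, is_dag k G -> is_dag k G' ->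
     markov_equiv G G' -> score H G = score H G')
  (Heps : 0 < eps) (Heps1 : 0 < eps1)
  (Hevent : event k eps eps1 Hhat H)
  (t : nat) (A0 A : {set fam d})
  (Hreach : reach k eps eps1 Hhat t A0 A)
  (f : fam d)
  (Hf : f \in Uf (Gstar k H A) :&: Fact_act k (Vof A))
  (Hneg : forall E, E \in ecs d k -> E :&: Gof k A != set0 ->
     f \notin Uf (E :&: Gof k A) ->
     scoreE H E < Sstar k H - 2 * theta eps1 t A) :
  forall Ghat, is_argmax k (Hhat t) A Ghat ->
    exists g, acceptable k (Hhat t) (theta eps1 t A) A Ghat g.
Proof.
move=> Ghat [HGh Hmax].
have Hepos : 0 < eps_t eps1 t by rewrite /eps_t divr_gt0 // exprn_gt0.
have Hth : 0 <= theta eps1 t A by rewrite /theta mulr_ge0 // ltW.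
have Herr : forall g, g \in Fact_act k (Vof A) ->
    `|Hhat t g - H g| <= eps_t eps1 t / 2.
  move=> g Hg; apply: (Hevent t A0 A Hreach).
  move: Hg; rewrite !inE => /andP [-> HgV] /=; apply: contra HgV.
  by apply: (subsetP (imsetS _ (reach_sub Hreach))).
case/setIP: Hf => /bigcupP [Gs HGs HfGs] HfA.
move: HGs; rewrite inE => /andP [HGsA /eqP HSs].
have HGhd : is_dag k Ghat by move: HGh; rewrite !inE => /andP [-> _].
have HGhE : Ghat \in ec k Ghat :&: Gof k A by rewrite inE ec_self.
have key : forall E, E \in ecs d k -> E :&: Gof k A != set0 ->
    f \notin Uf (E :&: Gof k A) ->
    theta eps1 t A < smax (ec k Ghat :&: Gof k A) (score (Hhat t))
                     - smax (E :&: Gof k A) (score (Hhat t)).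
  move=> E HE Hne Hnf.
  have [GE HGE ->] := smax_ex (score (Hhat t)) Hne.
  case/setIP: HGE => HGEE HGEA.
  have h1 : score (Hhat t) Ghat <= smax (ec k Ghat :&: Gof k A) (score (Hhat t)).
    exact: smax_ge.
  have h2 := Hmax Gs HGsA.
  have h3 : score H GE <= scoreE H E by apply: smax_ge.
  have h4 := Hneg E HE Hne Hnf.
  have HAs : A \subset Gs by move: HGsA; rewrite inE => /andP [_ ->].
  have HAE : A \subset GE by move: HGEA; rewrite inE => /andP [_ ->].
  have e1 := err_bound HGsA (ltW (divr_gt0 Hepos (ltr0Sn _ 1))) Herr.
  have e2 := err_bound HGEA (ltW (divr_gt0 Hepos (ltr0Sn _ 1))) Herr.
  rewrite sumrB in e1; rewrite sumrB in e2.
  have h5 : score H Gs - score H GE - theta eps1 t A <=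
            score (Hhat t) Gs - score (Hhat t) GE.
    rewrite !(score_split _ HAs) !(score_split _ HAE) /theta.
    move: e1 e2; rewrite !ler_norml.
    set n := (d - #|Vof A|)%:R; set e := eps_t eps1 t.
    have -> : n * (e / 2) = (n * e) / 2 by rewrite mulrA.
    lra.
  rewrite -HSs in h4.
  lra.
exists f; rewrite /acceptable /=; split.
  apply/negPn/negP => Hn.
  have HEc : ec k Ghat \in ecs d k by apply/imsetP; exists Ghat => //; rewrite inE.
  have Hne : ec k Ghat :&: Gof k A != set0 by apply/set0Pn; exists Ghat.
  have := key _ HEc Hne Hn; rewrite subrr; lra.
split => // E HE Hne Hle; apply/negPn/negP => Hn.
have := key E HE Hne Hn; lra.
Qed.
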